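(* Let $L>0$ and consider the sixth-order ODE $$\tfrac12\,\theta=\theta^2\bigl(\theta^{(6)}+\theta\bigr).$$ (i) There is no function $\theta\in C^6([-L,L])$, $\theta\not\equiv0$, solving this ODE on $(-L,L)$ with $\theta(\pm L)=\theta'(\pm L)=\theta''(\pm L)=0$. (ii) There is no $\theta\in C^6(\mathbb{R})$, $\theta\not\equiv 0$, with $\theta,\theta',\dots,\theta^{(5)}$ bounded on $\mathbb{R}$, solving this ODE on $\mathbb{R}$ with $\theta(x)\to0$ as $x\to\pm\infty$.
   Context: This is the profile equation for separable blow-up solutions $u=(T-t)^{-1/2}\theta(x)$ of $u_t=u^2(u_{xxxxxx}+u)$. For non-vanishing solutions one has the first integral $\tfrac12\ln|\theta|=\theta^{(5)}\theta'-\theta^{(4)}\theta''+\tfrac12(\theta'')^2+\tfrac12\theta^2+C$, $C\in\mathbb{R}$ a constant. *)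

(* Defs.v *)
From Stdlib Require Import Reals.
Open Scope R_scope.

Definition deriv_within (a b : R) (f : R -> R) (x l : R) : Prop :=
  forall eps, 0 < eps -> exists delta, 0 < delta /\
    forall h, h <> 0 -> Rabs h < delta -> a <= x + h <= b ->
      Rabs ((f (x + h) - f x) / h - l) < eps.

Definition cont_within (a b : R) (f : R -> R) (x : R) : Prop :=
  forall eps, 0 < eps -> exists delta, 0 < delta /\
    forall y, a <= y <= b -> Rabs (y - x) < delta -> Rabs (f y - f x) < eps.

(* theta is C^6 on [a,b], with d k its k-th derivative (k <= 6). *)
Definition C6_on (a b : R) (theta : R -> R) (d : nat -> R -> R) : Prop :=
  (forall x, a <= x <= b -> d 0%nat x = theta x) /\
  (forall k x, (k < 6)%nat -> a <= x <= b -> deriv_within a b (d k) x (d (S k) x)) /\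
  (forall x, a <= x <= b -> cont_within a b (d 6%nat) x).

Definition C6_R (theta : R -> R) (d : nat -> R -> R) : Prop :=
  (forall x, d 0%nat x = theta x) /\
  (forall k x, (k < 6)%nat -> derivable_pt_lim (d k) x (d (S k) x)) /\
  continuity (d 6%nat).

Definition profile_ode (theta : R -> R) (d : nat -> R -> R) (x : R) : Prop :=
  / 2 * theta x = (theta x) ^ 2 * (d 6%nat x + theta x).

(* Main.v *)
Require Import Defs.
From Stdlib Require Import Reals Lra Psatz Classical.
Open Scope R_scope.

Definition clamp (a b z : R) : R := Rmax a (Rmin b z).

Lemma clamp_in a b z : a <= b -> a <= clamp a b z <= b.
Proof. intros. unfold clamp, Rmax, Rmin. repeat destruct Rle_dec; lra. Qed.

Lemma clamp_id a b z : a <= z <= b -> clamp a b z = z.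
Proof. intros. unfold clamp, Rmax, Rmin. repeat destruct Rle_dec; lra. Qed.

Lemma clamp_lip a b x y : a <= b -> Rabs (clamp a b y - clamp a b x) <= Rabs (y - x).
Proof.
  intros. unfold clamp, Rmax, Rmin, Rabs.
  repeat destruct Rle_dec; repeat destruct Rcase_abs; lra.
Qed.

Lemma clamp_cont a b f : a <= b ->
  (forall x, a <= x <= b -> cont_within a b f x) ->
  continuity (fun z => f (clamp a b z)).
Proof.
  intros Hab Hc x eps Heps.
  destruct (Hc (clamp a b x) (clamp_in a b x Hab) eps Heps) as [del [Hd Hf]].
  exists del; split; [lra|].
  intros y [_ Hy]. simpl in *. unfold R_dist in *.
  apply Hf. apply clamp_in; auto.
  eapply Rle_lt_trans; [apply clamp_lip; auto | exact Hy].
Qed.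

Lemma deriv_cont a b f x l : deriv_within a b f x l -> cont_within a b f x.
Proof.
  intros Hd eps Heps.
  destruct (Hd 1 Rlt_0_1) as [del [Hdel Hf]].
  exists (Rmin del (eps / (Rabs l + 1))). split.
  { apply Rmin_pos; auto. apply Rdiv_lt_0_compat; auto. pose proof (Rabs_pos l); lra. }
  intros y Hy Hyx.
  destruct (Req_dec y x) as [->|Hne].
  { replace (f x - f x) with 0 by ring. rewrite Rabs_R0; auto. }
  set (h := y - x).
  assert (Hh : h <> 0) by (unfold h; lra).
  assert (Hm1 := Rmin_l del (eps / (Rabs l + 1))).
  assert (Hm2 := Rmin_r del (eps / (Rabs l + 1))).
  specialize (Hf h Hh ltac:(unfold h; lra) ltac:(unfold h; lra)).
  replace (x + h) with y in Hf by (unfold h; ring).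
  assert (Heq : f y - f x = h * ((f y - f x) / h - l) + h * l) by (field; auto).
  rewrite Heq.
  eapply Rle_lt_trans; [apply Rabs_triang|].
  rewrite !Rabs_mult.
  assert (Hl : 0 <= Rabs l) by apply Rabs_pos.
  assert (Hhp : 0 <= Rabs h) by apply Rabs_pos.
  assert (Hhe : Rabs h < eps / (Rabs l + 1)) by (unfold h; lra).
  assert (Hhe' : Rabs h * (Rabs l + 1) < eps).
  { apply (Rmult_lt_compat_r (Rabs l + 1)) in Hhe; [|lra].
    unfold Rdiv in Hhe. rewrite Rmult_assoc, Rinv_l in Hhe; lra. }
  nra.
Qed.

Lemma bound_on F a b : a <= b -> continuity F ->
  exists K, forall z, a <= z <= b -> Rabs (F z) <= K.
Proof.
  intros Hab Hc.
  destruct (continuity_ab_maj F a b Hab (fun c _ => Hc c)) as [M [HM _]].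
  destruct (continuity_ab_min F a b Hab (fun c _ => Hc c)) as [m [Hm _]].
  exists (Rabs (F M) + Rabs (F m)). intros z Hz.
  specialize (HM z Hz). specialize (Hm z Hz).
  unfold Rabs; repeat destruct Rcase_abs; lra.
Qed.

Lemma gap (F G : R -> R) a b x y : a <= b -> continuity F -> continuity G ->
  a <= x <= b -> a <= y <= b -> F x = 0 -> F y <> 0 ->
  (forall z, a <= z <= b -> F z <> 0 -> / 2 = F z * (G z + F z)) -> False.
Proof.
  intros Hab HF HG Hx Hy Fx Fy Hode.
  destruct (bound_on F a b Hab HF) as [K1 HK1].
  destruct (bound_on G a b Hab HG) as [K2 HK2].
  assert (K1p : 0 <= K1) by (specialize (HK1 a ltac:(lra)); pose proof (Rabs_pos (F a)); lra).
  assert (K2p : 0 <= K2) by (specialize (HK2 a ltac:(lra)); pose proof (Rabs_pos (G a)); lra).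
  set (K := K1 + K2).
  set (s := F y).
  assert (sp : 0 < Rabs s) by (apply Rabs_pos_lt; auto).
  set (D := 8 * (K + 1) * (Rabs s + 1)).
  assert (Dp : 0 < D) by (unfold D, K; nra).
  set (r := / D).
  assert (rp : 0 < r) by (apply Rinv_0_lt_compat; auto).
  assert (rD : r * D = 1) by (unfold r; field; lra).
  assert (D1 : 1 < D) by (unfold D, K; nra).
  assert (r1 : r < 1) by nra.
  set (t := s * r).
  destruct (IVT_cor (fun z => F z - t) (Rmin x y) (Rmax x y)) as [z [Hz Fz]].
  { intro w. apply continuity_pt_minus; auto. apply continuity_pt_const. intros u v; auto. }
  { apply Rle_trans with x; [apply Rmin_l | apply Rmax_l]. }
  { cbv beta. assert (0 <= s * s) by nra.
    unfold Rmin, Rmax; destruct (Rle_dec x y); rewrite Fx; fold s; unfold t; nra. }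
  assert (Hza : a <= z <= b).
  { unfold Rmin, Rmax in Hz; destruct Rle_dec; lra. }
  assert (Ft : F z = t) by lra.
  assert (tne : t <> 0) by (unfold t; intro Ht; apply Rmult_integral in Ht; destruct Ht;
    [apply Fy; auto | lra]).
  specialize (Hode z Hza ltac:(rewrite Ft; auto)).
  rewrite Ft in Hode.
  assert (Ha : Rabs t * Rabs (G z + t) = / 2).
  { rewrite <- Rabs_mult, <- Hode. rewrite Rabs_right; lra. }
  assert (Hb : Rabs (G z + t) <= K).
  { eapply Rle_trans; [apply Rabs_triang|]. specialize (HK2 z Hza). specialize (HK1 z Hza).
    rewrite Ft in HK1. unfold K; lra. }
  assert (Hc : Rabs t * (8 * (K + 1)) < 1).
  { unfold t. rewrite Rabs_mult, (Rabs_right r) by lra.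
    assert (Rabs s * r * (8 * (K + 1)) = Rabs s / (Rabs s + 1)).
    { unfold r, D. field. split; unfold K; lra. }
    rewrite H. apply (Rmult_lt_reg_r (Rabs s + 1)); [lra|].
    unfold Rdiv; rewrite Rmult_assoc, Rinv_l; lra. }
  pose proof (Rabs_pos t). pose proof (Rabs_pos (G z + t)).
  unfold K in *. nra.
Qed.

Lemma ode_div th g : th <> 0 -> / 2 * th = th ^ 2 * (g + th) -> / 2 = th * (g + th).
Proof.
  intros Hn He. apply (Rmult_eq_reg_l th); auto. rewrite Rmult_comm, He. ring.
Qed.

Theorem mainTheorem2 (L : R) (HL : 0 < L) :
  (* (i) no nontrivial C^6([-L,L]) solution with zero Dirichlet/Neumann/2nd-order data *)
  ~ (exists (theta : R -> R) (d : nat -> R -> R),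
        C6_on (- L) L theta d /\
        (exists x, - L <= x <= L /\ theta x <> 0) /\
        (forall x, - L < x < L -> profile_ode theta d x) /\
        (forall k, (k <= 2)%nat -> d k (- L) = 0 /\ d k L = 0))
  /\
  (* (ii) no nontrivial bounded C^6(R) solution decaying at +-infinity *)
  ~ (exists (theta : R -> R) (d : nat -> R -> R),
        C6_R theta d /\
        (exists x, theta x <> 0) /\
        (forall k, (k <= 5)%nat -> exists M, forall x, Rabs (d k x) <= M) /\
        (forall x, profile_ode theta d x) /\
        (forall eps, 0 < eps -> exists A, forall x, A < x -> Rabs (theta x) < eps) /\
        (forall eps, 0 < eps -> exists A, forall x, x < - A -> Rabs (theta x) < eps)).
Proof.
  split.
  - intros (theta & d & [H0 [Hd Hc6]] & [x0 [Hx0 Hn]] & Hode & Hbd).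
    assert (Hab : - L <= L) by lra.
    assert (HF := clamp_cont (- L) L (d 0%nat) Hab
      (fun x Hx => deriv_cont _ _ _ _ _ (Hd 0%nat x ltac:(lia) Hx))).
    assert (HG := clamp_cont (- L) L (d 6%nat) Hab Hc6).
    destruct (Hbd 0%nat ltac:(lia)) as [Hl Hr].
    apply (gap _ _ (- L) L (- L) x0 Hab HF HG); try lra.
    + rewrite clamp_id by lra. auto.
    + rewrite clamp_id by lra. rewrite H0; auto.
    + intros z Hz Hnz. rewrite clamp_id in * by lra.
      assert (Hzo : - L < z < L).
      { split; destruct (Req_dec z (- L)) as [->|]; try (exfalso; auto; fail);
        destruct (Req_dec z L) as [->|]; try (exfalso; auto; fail); lra. }
      specialize (Hode z Hzo). unfold profile_ode in Hode.
      rewrite <- (H0 z Hz) in Hode. apply ode_div; auto.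
  - intros (theta & d & [H0 [Hd Hc6]] & [x0 Hn] & Hbd & Hode & Hp & _).
    assert (HF : continuity (d 0%nat)).
    { intro x. apply derivable_continuous_pt. exists (d 1%nat x). apply Hd; lia. }
    destruct (Hbd 5%nat ltac:(lia)) as [M5 HM5].
    assert (M5p : 0 <= M5) by (specialize (HM5 0); pose proof (Rabs_pos (d 5%nat 0)); lra).
    destruct (Hp (/ 4) ltac:(lra)) as [A HA].
    set (p := Rmax A x0 + 1).
    set (h := 2 * M5 + 1).
    set (q := p + h).
    assert (Hp1 := Rmax_l A x0). assert (Hp2 := Rmax_r A x0).
    assert (Hode' : forall w, d 0%nat w <> 0 -> / 2 = d 0%nat w * (d 6%nat w + d 0%nat w)).
    { intros w Hw. apply ode_div; auto. rewrite (H0 w). apply Hode. }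
    destruct (classic (exists z, p <= z <= q /\ d 0%nat z = 0)) as [[z [Hz Hz0]] | Hno].
    + apply (gap (d 0%nat) (d 6%nat) x0 z z x0); auto; try (unfold q, h, p in *; lra).
      rewrite H0; auto.
    + destruct (MVT_cor2 (d 5%nat) (d 6%nat) p q ltac:(unfold q, h; lra)
        (fun c _ => Hd 5%nat c ltac:(lia))) as [c [Hmvt Hc]].
      assert (Hcz : d 0%nat c <> 0) by (intro; apply Hno; exists c; split; auto; lra).
      specialize (Hode' c Hcz).
      assert (Hsm : Rabs (d 0%nat c) < / 4) by (rewrite H0; apply HA; unfold p in *; lra).
      assert (Ha : Rabs (d 0%nat c) * Rabs (d 6%nat c + d 0%nat c) = / 2).
      { rewrite <- Rabs_mult, <- Hode'. rewrite Rabs_right; lra. }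
      pose proof (Rabs_pos (d 0%nat c)). pose proof (Rabs_pos (d 6%nat c + d 0%nat c)).
      assert (Hv : Rabs (d 6%nat c + d 0%nat c) > 2) by nra.
      assert (Hw : Rabs (d 6%nat c) > 1).
      { pose proof (Rabs_triang (d 6%nat c) (d 0%nat c)). lra. }
      assert (Hdiff : Rabs (d 5%nat q - d 5%nat p) <= 2 * M5).
      { eapply Rle_trans; [apply Rabs_triang|]. rewrite Rabs_Ropp.
        pose proof (HM5 q); pose proof (HM5 p); lra. }
      rewrite Hmvt, Rabs_mult in Hdiff.
      replace (q - p) with h in Hdiff by (unfold q; ring).
      rewrite (Rabs_right h) in Hdiff by (unfold h; lra).
      unfold h in *. nra.
Qed.
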